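(* Let $\psi:\mathbb{R}_{>0}\to\mathbb{R}_{>0}$ be monotonic with $\psi(h)\to0$, and let $0<\varepsilon<1$. There exist constants $c_1,c_2>0$ (depending only on $\varepsilon$) such that for every open disc $B\subset[\varepsilon,1]^2$ of radius $r<1$ there is $H_0=H_0(B)$ such that for all $(a,b)\in\mathbb{Z}_{\ge0}^2$ with $h_{a,b}\ge H_0$, \[ c_1|B|\frac{\psi(h_{a,b})}{h_{a,b}}\le|\sigma_{a,b}\cap B|\le c_2|B|\frac{\psi(h_{a,b})}{h_{a,b}}. \] Moreover, for such $(a,b)$, every $c\in\mathbb{Z}_{\ge0}$ with $\sigma_{a,b}(c)\cap B\neq\emptyset$ satisfies $\tfrac{\varepsilon}{2}h_{a,b}<c<2h_{a,b}$.
   Context: For $(a,b)\in\mathbb{Z}_{\ge0}^2$, $h_{a,b}=\max(a,b)$. For $c\in\mathbb{Z}_{\ge0}$ define $\sigma_{a,b}(c)=\{(x,y)\in[0,1]^2:|a^2x+b^2y-c^2|<\psi(h_{a,b})\}$ and $\sigma_{a,b}=\bigcup_{c\in\mathbb{Z}_{\ge0}}\sigma_{a,b}(c)$. $|\cdot|$ is Lebesgue measure on $\mathbb{R}^2$. *)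

(* Defs.v *)
From HB Require Import structures.
From mathcomp Require Import all_boot all_order all_algebra.
From mathcomp Require Import all_classical all_reals all_analysis.
Set Implicit Arguments. Unset Strict Implicit. Unset Printing Implicit Defensive.
Import Order.TTheory GRing.Theory Num.Theory.
Import numFieldNormedType.Exports.
Local Open Scope classical_set_scope.
Local Open Scope ring_scope.

Definition leb2 (R : realType) : set (R * R) -> \bar R :=
  ((@lebesgue_measure R) \x (@lebesgue_measure R))%E.

Definition hab (a b : nat) : nat := maxn a b.

Definition sigma_c (R : realType) (psi : R -> R) (a b c : nat) : set (R * R) :=
  [set p | 0 <= p.1 <= 1 /\ 0 <= p.2 <= 1 /\
     `|(a ^ 2)%:R * p.1 + (b ^ 2)%:R * p.2 - (c ^ 2)%:R| < psi (hab a b)%:R].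

Definition sigma_ab (R : realType) (psi : R -> R) (a b : nat) : set (R * R) :=
  \bigcup_(c in [set: nat]) sigma_c psi a b c.

Definition disc (R : realType) (x0 y0 r : R) : set (R * R) :=
  [set p | (p.1 - x0) ^+ 2 + (p.2 - y0) ^+ 2 < r ^+ 2].

Definition monotonic_pos (R : realType) (psi : R -> R) : Prop :=
  (forall x y, 0 < x -> x <= y -> psi x <= psi y) \/
  (forall x y, 0 < x -> x <= y -> psi y <= psi x).

(* Main.v *)
Require Import Defs.
From HB Require Import structures.
From mathcomp Require Import all_boot all_order all_algebra.
From mathcomp Require Import all_classical all_reals all_analysis.
From mathcomp Require Import ring lra.
Import Order.TTheory GRing.Theory Num.Theory.
Import numFieldNormedType.Exports.
Local Open Scope classical_set_scope.
Local Open Scope ring_scope.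

Lemma mfun_fst (R : realType) :
  measurable_fun setT (fun p : (measurableTypeR R * measurableTypeR R)%type => p.1).
Proof. exact: measurable_fst. Qed.

Lemma mfun_snd (R : realType) :
  measurable_fun setT (fun p : (measurableTypeR R * measurableTypeR R)%type => p.2).
Proof. exact: measurable_snd. Qed.

Lemma mset_lt (R : realType) (f g : (measurableTypeR R * measurableTypeR R)%type -> R) :
  measurable_fun setT f -> measurable_fun setT g -> measurable [set p | f p < g p].
Proof.
move=> mf mg.
have := measurable_realfun.measurable_funB mg mf measurableT (measurable_itv `]0, +oo[).
rewrite setTI; congr measurable; apply/seteqP; split => p /=;
  by rewrite in_itv /= andbT subr_gt0.
Qed.

Lemma mset_le (R : realType) (f g : (measurableTypeR R * measurableTypeR R)%type -> R) :
  measurable_fun setT f -> measurable_fun setT g -> measurable [set p | f p <= g p].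
Proof.
move=> mf mg.
have := measurable_realfun.measurable_funB mg mf measurableT (measurable_itv `[0, +oo[).
rewrite setTI; congr measurable; apply/seteqP; split => p /=;
  by rewrite in_itv /= andbT subr_ge0.
Qed.

Notation mD := measurable_realfun.measurable_funD.
Notation mB := measurable_realfun.measurable_funB.
Notation mM := measurable_realfun.measurable_funM.
Notation mX := measurable_realfun.measurable_funX.

Lemma sigma_c_meas (R : realType) (psi : R -> R) a b c :
  measurable (sigma_c psi a b c : set (measurableTypeR R * measurableTypeR R)%type).
Proof.
have -> : sigma_c psi a b c =
  [set p : (measurableTypeR R * measurableTypeR R)%type | (fun=> 0) p <= p.1] `&`
  [set p | p.1 <= (fun=> 1) p] `&`
  [set p | (fun=> 0) p <= p.2] `&` [set p | p.2 <= (fun=> 1) p] `&`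
  [set p | `|(a ^ 2)%:R * p.1 + (b ^ 2)%:R * p.2 - (c ^ 2)%:R| < (fun=> psi (hab a b)%:R) p].
  apply/seteqP; split => p /=.
    by move=> [/andP[? ?] [/andP[? ?] ?]].
  by move=> [[[[? ?] ?] ?] ?]; split; [apply/andP|split; [apply/andP|]].
have m1 := mfun_fst R; have m2 := mfun_snd R.
apply: measurableI; [apply: measurableI; [apply: measurableI; [apply: measurableI|]|]|].
- exact: mset_le.
- exact: mset_le.
- exact: mset_le.
- exact: mset_le.
- apply: mset_lt => //.
  apply: measurableT_comp; first exact: measurable_realfun.normr_measurable.
  apply: mB; last exact: measurable_cst.
  apply: mD; apply: mM => //; exact: measurable_cst.
Qed.

Lemma sigma_ab_meas (R : realType) (psi : R -> R) a b :
  measurable (sigma_ab psi a b : set (measurableTypeR R * measurableTypeR R)%type).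
Proof. by apply: bigcupT_measurable => c; exact: sigma_c_meas. Qed.

Lemma disc_meas (R : realType) (x0 y0 r : R) :
  measurable (disc x0 y0 r : set (measurableTypeR R * measurableTypeR R)%type).
Proof.
have m1 := mfun_fst R; have m2 := mfun_snd R.
rewrite /disc; apply: mset_lt; last exact: measurable_cst.
apply: mD; apply: mX; apply: mB => //; exact: measurable_cst.
Qed.

Lemma leb2_swap (R : realType) (A : set (measurableTypeR R * measurableTypeR R)%type) :
  measurable A -> leb2 A = leb2 [set p | A (p.2, p.1)].
Proof.
move=> mA; rewrite /leb2.
rewrite (@product_measure_unique _ _ _ _ R (@lebesgue_measure R) (@lebesgue_measure R)
  (lebesgue_measure \x^ lebesgue_measure)%E _ A mA); last first.
  by move=> X Y mX mY; rewrite [LHS]product_measure2E.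
rewrite /product_measure2 /product_measure1; apply: eq_integral => y _ /=.
congr (lebesgue_measure _); apply/seteqP; split => x /=;
  by rewrite /xsection /ysection /= !in_setE.
Qed.

Lemma leb_itv (R : realType) (u v : R) : u <= v ->
  (@lebesgue_measure R) `]u, v[ = (v - u)%:E.
Proof.
move=> uv; rewrite lebesgue_measure_itv /= lte_fin.
have [uv'|] := ltP u v; first by rewrite -EFinD.
move=> vu; have -> : v = u by apply/eqP; rewrite eq_le uv vu.
by rewrite subrr.
Qed.

Lemma leb2_rect (R : realType) (a b c d : R) : a <= b -> c <= d ->
  leb2 (`]a, b[ `*` `]c, d[) = ((b - a) * (d - c))%:E.
Proof.
move=> ab cd; rewrite /leb2 product_measure1E //.
transitivity ((b - a)%:E * (d - c)%:E)%E; last by rewrite EFinM.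
by congr (_ * _)%E; exact: leb_itv.
Qed.

Lemma disc_ub (R : realType) (x0 y0 r : R) : 0 < r ->
  (leb2 (disc x0 y0 r) <= (4 * r ^+ 2)%:E)%E.
Proof.
move=> r0.
apply: (@le_trans _ _ (leb2 (`]x0 - r, x0 + r[ `*` `]y0 - r, y0 + r[))).
  apply: le_measure; rewrite ?inE; [exact: disc_meas| |].
    by apply: measurableX; exact: measurable_itv.
  move=> [x y] /=; rewrite /disc /= => H; rewrite !in_itv /=.
  have := sqr_ge0 (x - x0); have := sqr_ge0 (y - y0).
  rewrite !expr2 in H * => h1 h2.
  split; apply/andP; split; nra.
rewrite leb2_rect; [|lra|lra].
rewrite lee_fin !expr2; nra.
Qed.

Lemma inner_sq_disc (R : realType) (x0 y0 r : R) : 0 < r ->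
  `]x0 - r / 2, x0 + r / 2[ `*` `]y0 - r / 2, y0 + r / 2[ `<=` disc x0 y0 r.
Proof.
move=> r0 [x y] /= [] /=; rewrite !in_itv /= => /andP[h1 h2] /andP[h3 h4].
rewrite /disc /= !expr2; nra.
Qed.

Lemma disc_lb (R : realType) (x0 y0 r : R) : 0 < r ->
  ((r ^+ 2)%:E <= leb2 (disc x0 y0 r))%E.
Proof.
move=> r0.
apply: (@le_trans _ _ (leb2 (`]x0 - r / 2, x0 + r / 2[ `*` `]y0 - r / 2, y0 + r / 2[))).
  rewrite leb2_rect; [|lra|lra].
  rewrite lee_fin !expr2; nra.
apply: le_measure; rewrite ?inE; [|exact: disc_meas|exact: inner_sq_disc].
by apply: measurableX; exact: measurable_itv.
Qed.

Definition box {R : realType} (eps : R) : set (R * R) :=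
  [set p | eps <= p.1 <= 1 /\ eps <= p.2 <= 1].

Lemma box_y (R : realType) (eps x0 y0 r : R) : 0 < r ->
  disc x0 y0 r `<=` box eps -> eps <= y0 - r.
Proof.
move=> r0 sub; rewrite leNgt; apply/negP => H.
set d := eps - (y0 - r).
have d0 : 0 < d by rewrite /d; lra.
have [dr|rd] := leP d r.
  have : disc x0 y0 r (x0, y0 - r + d / 2).
    rewrite /disc /= subrr expr0n /= add0r !expr2; nra.
  by move/sub => [_ /= /andP[+ _]]; rewrite /d; lra.
have : disc x0 y0 r (x0, y0 - r / 2).
  rewrite /disc /= subrr expr0n /= add0r !expr2; nra.
by move/sub => [_ /= /andP[+ _]]; rewrite /d in rd; lra.
Qed.

Lemma disc_swap (R : realType) (x0 y0 r : R) :
  [set p | disc x0 y0 r (p.2, p.1)] = disc y0 x0 r.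
Proof. by apply/seteqP; split => -[x y]; rewrite /disc /= addrC. Qed.

Lemma box_swap (R : realType) (eps x0 y0 r : R) :
  disc x0 y0 r `<=` box eps -> disc y0 x0 r `<=` box eps.
Proof.
move=> sub [x y]; rewrite -disc_swap => /sub [h1 h2]; by split.
Qed.
Lemma arith_lb (R : realType) (S K h r p lo c : R) :
  0 <= S -> S ^+ 2 = lo + p -> S <= 2 * h -> 0 <= K -> K <= h * r / 8 ->
  0 < r -> r < 1 -> 0 < p -> p <= 1/4 -> 16 <= h * r ->
  S < c -> c <= S + K ->
  lo < c ^+ 2 - p /\ c ^+ 2 + p <= lo + h ^+ 2 * r.
Proof.
move=> S0 SE S2h K0 Kh r0 r1 p0 p1 hr Sc cSK.
have h0 : 16 <= h by nra.
have c0 : 0 <= c by lra.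
split.
  have : S ^+ 2 < c ^+ 2 by rewrite !expr2; nra.
  lra.
have e1 : c ^+ 2 <= (S + K) ^+ 2 by rewrite !expr2; nra.
have e2 : (S + K) ^+ 2 = S ^+ 2 + 2 * S * K + K ^+ 2 by ring.
have e3 : 2 * S * K <= h ^+ 2 * r / 2.
  have : 2 * S * K <= 4 * h * K by nra.
  rewrite expr2; nra.
have e4 : K ^+ 2 <= h ^+ 2 * r / 64.
  have : K ^+ 2 <= (h * r / 8) ^+ 2 by rewrite !expr2; nra.
  rewrite !expr2; nra.
have e5 : 1 <= h ^+ 2 * r / 4 by rewrite expr2; nra.
lra.
Qed.

Lemma arith_ub (R : realType) (p q v w h r e K : R) :
  0 <= p -> 0 <= q -> p ^+ 2 = w -> q ^+ 2 = v -> e * h / 2 <= q ->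
  0 < e -> e < 1 -> 0 < r -> 1 <= h * r -> 0 < h ->
  w - v <= 3 * h ^+ 2 * r ->
  K < p - q + 1 ->
  K <= 7 * h * r / e.
Proof.
move=> p0 q0 pw qv eq e0 e1 r0 hr h0 wv Kpq.
have eh : 0 < e * h by nra.
case: (leP p q) => pq.
  have : 1 <= 7 * h * r / e.
    rewrite ler_pdivlMr //; nra.
  lra.
have : (p - q) * (e * h / 2) <= w - v.
  have : (p - q) * (p + q) = w - v by rewrite -pw -qv; ring.
  nra.
move=> H.
have : p - q <= 6 * h * r / e.
  rewrite ler_pdivlMr //.
  have : (p - q) * (e * h) <= 6 * h ^+ 2 * r by lra.
  rewrite expr2; nra.
have : 1 <= h * r / e by rewrite ler_pdivlMr //; nra.
have -> : 7 * h * r / e = 6 * h * r / e + h * r / e by field; lra.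
lra.
Qed.

Lemma trunc_bounds (R : realType) (S : R) : 0 <= S ->
  (Num.truncn S)%:R <= S /\ S < (Num.truncn S)%:R + 1.
Proof.
move=> S0; split; first by rewrite truncn_le.
by rewrite natr1 -truncn_lt_nat // ltnSn.
Qed.

Lemma inner_box (R : realType) (eps x0 y0 r x y : R) : 0 < r ->
  disc x0 y0 r `<=` box eps ->
  x0 - r / 2 < x -> x < x0 + r / 2 -> y0 - r / 2 < y -> y < y0 + r / 2 ->
  disc x0 y0 r (x, y) /\ eps <= x <= 1 /\ eps <= y <= 1.
Proof.
move=> r0 sub h1 h2 h3 h4.
have D : disc x0 y0 r (x, y).
  apply: (@inner_sq_disc R x0 y0 r r0 (x, y)).
  by split; rewrite /= in_itv /=; apply/andP; split.
by split => //; have [] := sub _ D.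
Qed.

Lemma sec_lb (R : realType) (psi : R -> R) (a b : nat) (eps x0 y0 r x : R) :
  (a <= b)%N -> 0 < eps -> 0 < r -> r < 1 ->
  disc x0 y0 r `<=` box eps ->
  0 < psi (hab a b)%:R -> psi (hab a b)%:R <= 1/4 ->
  16 <= b%:R * r ->
  x0 - r / 2 < x -> x < x0 + r / 2 ->
  ((r * psi (hab a b)%:R / (8 * b%:R))%:E <=
     (@lebesgue_measure R) (xsection (sigma_ab psi a b `&` disc x0 y0 r) x))%E.
Proof.
move=> ab e0 r0 r1 sub p0 p1 hr xl xr.
set p := psi _.
rewrite -/p in p0 p1.
set h : R := b%:R.
rewrite -/h in hr.
have h16 : 16 <= h by rewrite /h; nra.
have hpos : 0 < h by lra.
have [_ [/andP[ex x1] /andP[ey1 y1]]] :=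
  @inner_box R eps x0 y0 r x y0 r0 sub xl xr (ltac:(lra)) (ltac:(lra)).
have [ey2 [_ _]] : eps <= y0 - r / 2 /\ True /\ True.
  have : disc x0 y0 r (x0, y0 - r / 2).
    rewrite /disc /= subrr expr0n /= add0r !expr2; nra.
  by move/sub => [_ /= /andP[? _]].
have [ey3 _] : y0 + r / 2 <= 1 /\ True.
  have : disc x0 y0 r (x0, y0 + r / 2).
    rewrite /disc /= subrr expr0n /= add0r !expr2; nra.
  by move/sub => [_ /= /andP[_ ?]].
set al : R := (a ^ 2)%:R * x.
set be : R := (b ^ 2)%:R.
have beE : be = h ^+ 2 by rewrite /be natrX.
have ah : a%:R <= h by rewrite /h ler_nat.
have a0 : 0 <= (a%:R : R) by [].
have al0 : 0 <= al by rewrite /al natrX; apply: mulr_ge0; [exact: exprn_ge0|lra].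
have alh : al <= h ^+ 2.
  rewrite /al natrX.
  have : a%:R ^+ 2 <= h ^+ 2 by rewrite !expr2; nra.
  move=> H; have : 0 <= (a%:R : R) ^+ 2 by apply: exprn_ge0.
  nra.
set lo := al + be * (y0 - r / 2).
have lo0 : 0 <= lo by rewrite /lo beE; have := sqr_ge0 h; nra.
set S := Num.sqrt (lo + p).
have S0 : 0 <= S by apply: sqrtr_ge0.
have SE : S ^+ 2 = lo + p by rewrite sqr_sqrtr //; lra.
have S2h : S <= 2 * h.
  have : S ^+ 2 <= (2 * h) ^+ 2.
    rewrite SE /lo beE; have := sqr_ge0 h; rewrite !expr2; nra.
  rewrite !expr2 => H; nra.
have [tS1 tS2] := @trunc_bounds R S S0.
set m := (Num.truncn S).+1.
set t := Num.truncn S in m tS1 tS2.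
have mS : S < m%:R by rewrite /m -natr1.
have mS1 : m%:R <= S + 1 by rewrite /m -natr1; lra.
have hr8 : 0 <= h * r / 8 by apply: divr_ge0 => //; nra.
have [K1 K2] := @trunc_bounds R _ hr8.
set K := Num.truncn (h * r / 8) in K1 K2.
set F : nat -> set R := fun k =>
  `]((((m + k) ^ 2)%:R - p - al) / be), ((((m + k) ^ 2)%:R + p - al) / be)[%classic.
have be0 : 0 < be by rewrite beE; apply: exprn_gt0.
have cb : forall k, (k < K)%N ->
    lo < ((m + k) ^ 2)%:R - p /\ ((m + k) ^ 2)%:R + p <= lo + h ^+ 2 * r.
  move=> k kK; rewrite natrX.
  apply: (@arith_lb R S K%:R) => //.
  - by rewrite natrD; have : (0 : R) <= k%:R by []; lra.
  - rewrite natrD; have : (k.+1%:R : R) <= K%:R by rewrite ler_nat.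
    rewrite -natr1; lra.
have memF : forall k y, F k y -> ((((m + k) ^ 2)%:R - p - al) < y * be) /\
                                 (y * be < (((m + k) ^ 2)%:R + p - al)).
  move=> k y; rewrite /F /= in_itv /= => /andP[].
  by rewrite ltr_pdivrMr // ltr_pdivlMr // => -> ->.
have subF : \big[setU/set0]_(k < K) F k `<=`
            xsection (sigma_ab psi a b `&` disc x0 y0 r) x.
  rewrite -bigcup_mkord => y [k /= kK /memF [Fl Fr]].
  have [cl cr] := cb k kK.
  have yl : y0 - r / 2 < y.
    have : be * (y0 - r / 2) < be * y by rewrite /lo in cl; lra.
    by rewrite ltr_pM2l.
  have yr : y < y0 + r / 2.
    have : be * y < be * (y0 + r / 2).
      rewrite /lo beE in cl cr *; rewrite beE in Fr; nra.
    by rewrite ltr_pM2l.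
  have [D [/andP[ex' x1'] /andP[ey' y1']]] := @inner_box R eps x0 y0 r x y r0 sub xl xr yl yr.
  rewrite /xsection /= in_setE /=; split => //.
  exists (m + k) => //; rewrite /sigma_c /=.
  split; first by apply/andP; split; lra.
  split; first by apply/andP; split; lra.
  rewrite ltr_norml -/p; apply/andP; split.
    by rewrite -/al -/be; lra.
  by rewrite -/al -/be; lra.
have disj : forall i j y, (i < j)%N -> F i y -> F j y -> False.
  move=> i j y ij /memF [Fil Fir] /memF [Fjl Fjr].
  have : (((m + i) ^ 2).+1 <= (m + j) ^ 2)%N.
    by rewrite ltn_exp2r // ltn_add2l.
  rewrite -(ler_nat R) -natr1 => H.
  lra.
have triv : trivIset `I_K F.
  move=> i j _ _ [y [Fi Fj]].
  case: (ltngtP i j) => // [ij|ji]; first by case: (disj _ _ _ ij Fi Fj).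
  by case: (disj _ _ _ ji Fj Fi).
have mA : measurable (sigma_ab psi a b `&` disc x0 y0 r :
    set (measurableTypeR R * measurableTypeR R)%type).
  by apply: measurableI; [exact: sigma_ab_meas|exact: disc_meas].
have mF : forall k, measurable (F k) by move=> k; exact: measurable_itv.
have lenF : forall k, (@lebesgue_measure R) (F k) = (2 * p / be)%:E.
  move=> k; rewrite leb_itv; last first.
    by rewrite ler_pM2r ?invr_gt0 //; lra.
  congr EFin; field; lra.
apply: (@le_trans _ _ ((@lebesgue_measure R) (\big[setU/set0]_(k < K) F k))); last first.
  apply: le_measure; rewrite ?inE //; last exact: measurable_xsection.
  by apply: bigsetU_measurable => k _; apply: mF.
rewrite measure_semi_additive_ord_I //; last by apply: bigsetU_measurable => k _; apply: mF.
rewrite (eq_bigr (fun=> (2 * p / be)%:E)); last by move=> k _; exact: lenF.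
rewrite sumEFin sumr_const card_ord lee_fin -[_ *+ K]mulr_natl.
have : r * p / (8 * h) <= K%:R * (2 * p / be).
  rewrite -subr_ge0.
  have -> : K%:R * (2 * p / be) - r * p / (8 * h) =
            p / (8 * h ^+ 2) * (16 * K%:R - h * r).
    by rewrite beE; field; lra.
  apply: mulr_ge0; last lra.
  apply: divr_ge0; first lra.
  by rewrite expr2; nra.
done.
by move=> k _; apply: mF.
Qed.

Definition Itv {R : realType} (p al be : R) (m k : nat) : set R :=
  `]((((m + k) ^ 2)%:R - p - al) / be), ((((m + k) ^ 2)%:R + p - al) / be)[%classic.

Lemma Itv_mem {R : realType} {p al be : R} {m k : nat} {y : R} : 0 < be ->
  Itv p al be m k y ->
  (((m + k) ^ 2)%:R - p - al < y * be) /\ (y * be < ((m + k) ^ 2)%:R + p - al).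
Proof.
move=> be0; rewrite /Itv /= in_itv /= => /andP[].
by rewrite ltr_pdivrMr // ltr_pdivlMr // => -> ->.
Qed.

Lemma union_meas {R : realType} (p al be : R) (m K : nat) :
  0 < be -> 0 < p -> p <= 1/4 ->
  (@lebesgue_measure R) (\big[setU/set0]_(k < K) Itv p al be m k) =
  (K%:R * (2 * p / be))%:E.
Proof.
move=> be0 p0 p1.
have mF : forall k, measurable (Itv p al be m k) by move=> k; exact: measurable_itv.
have triv : trivIset `I_K (Itv p al be m).
  have disj : forall i j y, (i < j)%N -> Itv p al be m i y -> Itv p al be m j y -> False.
    move=> i j y ij /(Itv_mem be0) [Fil Fir] /(Itv_mem be0) [Fjl Fjr].
    have : (((m + i) ^ 2).+1 <= (m + j) ^ 2)%N.
      by rewrite ltn_exp2r // ltn_add2l.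
    rewrite -(ler_nat R) -natr1 => H.
    lra.
  move=> i j _ _ [y [Fi Fj]].
  case: (ltngtP i j) => // [ij|ji]; first by case: (disj _ _ _ ij Fi Fj).
  by case: (disj _ _ _ ji Fj Fi).
rewrite measure_semi_additive_ord_I //; first last.
- by apply: bigsetU_measurable => k _; apply: mF.
- by move=> k _; apply: mF.
rewrite (eq_bigr (fun=> (2 * p / be)%:E)); last first.
  move=> k _; change ((@lebesgue_measure R) (Itv p al be m k) = (2 * p / be)%:E).
  rewrite /Itv leb_itv; last first.
    by rewrite ler_pM2r ?invr_gt0 //; lra.
  congr EFin; field; lra.
by rewrite sumEFin sumr_const card_ord -[_ *+ K]mulr_natl.
Qed.

Lemma sq_le {R : realType} (x y : R) : 0 <= x -> 0 <= y -> x ^+ 2 <= y ^+ 2 -> x <= y.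
Proof. by move=> x0 y0; rewrite (ler_pXn2r (_ : (0 < 2)%N)) ?nnegrE. Qed.

Lemma sq_lt {R : realType} (x y : R) : 0 <= x -> 0 <= y -> x ^+ 2 < y ^+ 2 -> x < y.
Proof. by move=> x0 y0; rewrite (ltr_pXn2r (_ : (0 < 2)%N)) ?nnegrE. Qed.

Lemma abs_sq {R : realType} (u r : R) : 0 < r -> u ^+ 2 < r ^+ 2 -> - r < u < r.
Proof.
move=> r0 H; rewrite -ltr_norml; apply: sq_lt => //; first exact: ltW.
by rewrite real_normK // num_real.
Qed.

Lemma ge1_of {R : realType} (h e : R) : 0 < e -> e < 1 -> 1 <= h * e -> 1 <= h.
Proof. move=> e0 e1 he; nra. Qed.

Lemma ge1_sq {R : realType} (h e : R) : 1 <= h -> 1 <= h * e -> 1 <= h ^+ 2 * e.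
Proof. move=> h1 he; rewrite expr2; nra. Qed.

Lemma sec_ub (R : realType) (psi : R -> R) (a b : nat) (eps x0 y0 r x : R) :
  (a <= b)%N -> 0 < eps -> eps < 1 -> 0 < r -> r < 1 ->
  disc x0 y0 r `<=` box eps ->
  0 < psi (hab a b)%:R -> psi (hab a b)%:R <= 1/4 ->
  1 <= b%:R * r -> 1 <= b%:R * eps ->
  ((@lebesgue_measure R) (xsection (sigma_ab psi a b `&` disc x0 y0 r) x) <=
     (14 * r * psi (hab a b)%:R / (eps * b%:R))%:E)%E.
Proof.
move=> ab e0 e1 r0 r1 sub p0 p1 hr he.
set p := psi _.
rewrite -/p in p0 p1.
set h : R := b%:R.
rewrite -/h in hr he.
have h1 : 1 <= h by apply: (@ge1_of R h eps e0 e1).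
have hpos : 0 < h by lra.
have V0 : 0 <= 14 * r * p / (eps * h).
  by apply: divr_ge0; apply: mulr_ge0; try apply: mulr_ge0; lra.
have mA : measurable (sigma_ab psi a b `&` disc x0 y0 r :
    set (measurableTypeR R * measurableTypeR R)%type).
  by apply: measurableI; [exact: sigma_ab_meas|exact: disc_meas].
have [/andP[x0' x1]|nx] := boolP ((0 <= x) && (x <= 1)); last first.
  have -> : xsection (sigma_ab psi a b `&` disc x0 y0 r) x = set0.
    apply/seteqP; split => // y; rewrite /xsection /= in_setE /=.
    move=> [[c _ [H _]] _]; by rewrite H in nx.
  by rewrite measure0 lee_fin.
have ey := @box_y R eps x0 y0 r r0 sub.
set al : R := (a ^ 2)%:R * x.
set be : R := (b ^ 2)%:R.
have beE : be = h ^+ 2 by rewrite /be natrX.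
have be0 : 0 < be by rewrite beE; apply: exprn_gt0.
have ah : a%:R <= h by rewrite /h ler_nat.
have a0 : 0 <= (a%:R : R) by [].
have al0 : 0 <= al by rewrite /al natrX; apply: mulr_ge0; [exact: exprn_ge0|lra].
set v := al + be * (y0 - r) - p.
set w := al + be * (y0 + r) + p.
have hhe : 1 <= h ^+ 2 * eps by apply: ge1_sq.
have vlb : h ^+ 2 * eps / 2 <= v.
  rewrite /v beE.
  have : h ^+ 2 * eps <= h ^+ 2 * (y0 - r) by rewrite ler_pM2l // exprn_gt0.
  lra.
have v0 : 0 <= v by lra.
have w0 : 0 <= w.
  have : 0 <= be * (y0 + r) by apply: mulr_ge0; lra.
  rewrite /w; lra.
set q := Num.sqrt v.
set pw := Num.sqrt w.
have q0 : 0 <= q by apply: sqrtr_ge0.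
have pw0 : 0 <= pw by apply: sqrtr_ge0.
have qE : q ^+ 2 = v by rewrite sqr_sqrtr.
have pwE : pw ^+ 2 = w by rewrite sqr_sqrtr.
have [tq1 tq2] := @trunc_bounds R q q0.
have [tw1 tw2] := @trunc_bounds R pw pw0.
set n := Num.truncn q in tq1 tq2.
set N := Num.truncn pw in tw1 tw2.
set K := (N - n)%N.
have cover : xsection (sigma_ab psi a b `&` disc x0 y0 r) x `<=`
             \big[setU/set0]_(k < K) Itv p al be n.+1 k.
  move=> y; rewrite /xsection /= in_setE /=.
  move=> [[c _ [_ [/andP[y0' y1'] Hc]]] D].
  rewrite -/p ltr_norml in Hc; case/andP: Hc => Hc1 Hc2.
  rewrite -/al -/be /= in Hc1 Hc2.
  rewrite /disc /= in D.
  have Dy : (y - y0) ^+ 2 < r ^+ 2.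
    have := sqr_ge0 (x - x0); lra.
  have /andP[yl yr] := @abs_sq R (y - y0) r r0 Dy.
  have {}yl : y0 - r < y by lra.
  have {}yr : y < y0 + r by lra.
  have c0 : (0 : R) <= c%:R by [].
  have cv : v < (c ^ 2)%:R.
    rewrite /v -/al -/be; have : be * (y0 - r) < be * y by rewrite ltr_pM2l.
    lra.
  have cw : (c ^ 2)%:R < w.
    rewrite /w -/al -/be; have : be * y < be * (y0 + r) by rewrite ltr_pM2l.
    lra.
  rewrite natrX in cv cw.
  have qc : q < c%:R.
    by apply: sq_lt => //; rewrite qE.
  have cpw : c%:R < pw.
    by apply: sq_lt => //; rewrite pwE.
  have nc : (n < c)%N by rewrite -(ltr_nat R); lra.
  have cN : (c <= N)%N by rewrite /N truncn_ge_nat //; lra.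
  rewrite -bigcup_mkord; exists (c - n.+1)%N.
    rewrite /= /K; apply: leq_trans (leq_sub2r n cN).
    by rewrite subnS prednK // subn_gt0.
  rewrite /Itv /= in_itv /= ltr_pdivrMr // ltr_pdivlMr // subnKC //.
  apply/andP; split.
    by rewrite -/al -/be; lra.
  by rewrite -/al -/be; lra.
apply: (@le_trans _ _ ((@lebesgue_measure R) (\big[setU/set0]_(k < K) Itv p al be n.+1 k))).
  apply: le_measure; rewrite ?inE //; first exact: measurable_xsection.
  by apply: bigsetU_measurable => k _; exact: measurable_itv.
rewrite union_meas // lee_fin.
have KB : K%:R < pw - q + 1.
  rewrite /K; have [nN|Nn] := leqP n N.
    by rewrite natrB //; lra.
  have -> : (N - n)%N = 0%N by apply/eqP; rewrite subn_eq0 ltnW.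
  have : q <= pw.
    apply: sq_le => //; rewrite qE pwE /v /w.
    have : 0 <= be * r by apply: mulr_ge0; lra.
    lra.
  lra.
have Kb : K%:R <= 7 * h * r / eps.
  apply: (@arith_ub R pw q v w h r eps) => //.
  - apply: sq_le => //; first by apply: divr_ge0 => //; apply: mulr_ge0; lra.
    rewrite qE; apply: le_trans vlb.
    have -> : (eps * h / 2) ^+ 2 = (eps / 4) * (h ^+ 2 * eps) by field.
    rewrite -subr_ge0.
    have -> : h ^+ 2 * eps / 2 - eps / 4 * (h ^+ 2 * eps) =
              (h ^+ 2 * eps) * (1 / 2 - eps / 4) by field.
    apply: mulr_ge0; lra.
  - rewrite /w /v beE; have : 1 <= h ^+ 2 * r by apply: ge1_sq.
    lra.
have -> : 14 * r * p / (eps * h) = (7 * h * r / eps) * (2 * p / be).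
  by rewrite beE; field; lra.
apply: ler_wpM2r => //.
by apply: divr_ge0; lra.
Qed.

From mathcomp Require Import measurable_realfun.

Lemma int_indic {R : realType} (I : set R) (k : R) : measurable I -> 0 <= k ->
  (\int[(@lebesgue_measure R)]_x (k * \1_I x)%:E = k%:E * (@lebesgue_measure R) I)%E.
Proof.
move=> mI k0.
under eq_integral => x _ do rewrite EFinM.
rewrite ge0_integralZl_EFin //.
  by rewrite integral_indic // setIT.
all: try (by move=> x _; rewrite lee_fin indicE).
all: try (apply/measurable_realfun.measurable_EFinP; exact: measurable_realfun.measurable_indic).
Qed.

Lemma int_lb {R : realType} (g : measurableTypeR R -> \bar R) (I : set R) (k : R) :
  measurable I -> 0 <= k -> measurable_fun (setT : set (measurableTypeR R)) g ->
  (forall x, (0 <= g x)%E) -> (forall x, I x -> (k%:E <= g x)%E) ->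
  (k%:E * (@lebesgue_measure R) I <= \int[(@lebesgue_measure R)]_x g x)%E.
Proof.
move=> mI k0 mg g0 gI.
rewrite -int_indic //.
apply: ge0_le_integral => //.
- by move=> x _; rewrite lee_fin; apply: mulr_ge0 => //; rewrite indicE.
- apply/measurable_realfun.measurable_EFinP; apply: mM; first exact: measurable_cst.
  exact: measurable_realfun.measurable_indic.
- move=> x _; rewrite indicE; case: (boolP (x \in I)) => [xI|_].
    by rewrite mulr1; apply: gI; rewrite -in_setE.
  by rewrite mulr0.
Qed.

Lemma int_ub {R : realType} (g : measurableTypeR R -> \bar R) (I : set R) (k : R) :
  measurable I -> 0 <= k -> measurable_fun (setT : set (measurableTypeR R)) g ->
  (forall x, (0 <= g x)%E) -> (forall x, (g x <= (k * \1_I x)%:E)%E) ->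
  (\int[(@lebesgue_measure R)]_x g x <= k%:E * (@lebesgue_measure R) I)%E.
Proof.
move=> mI k0 mg g0 gI.
rewrite -int_indic //.
apply: ge0_le_integral => //.
apply/measurable_realfun.measurable_EFinP; apply: mM; first exact: measurable_cst.
exact: measurable_realfun.measurable_indic.
Qed.

Lemma sec_empty (R : realType) (psi : R -> R) (a b : nat) (x0 y0 r x : R) :
  0 < r -> ~ (x0 - r < x < x0 + r) ->
  xsection (sigma_ab psi a b `&` disc x0 y0 r) x = set0.
Proof.
move=> r0 nx; apply/seteqP; split => // y; rewrite /xsection /= in_setE /=.
move=> [_ D]; apply: nx; rewrite /disc /= in D.
have Dx : (x - x0) ^+ 2 < r ^+ 2 by have := sqr_ge0 (y - y0); lra.
have /andP[h1 h2] := @abs_sq R (x - x0) r r0 Dx.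
by apply/andP; split; lra.
Qed.

Lemma core (R : realType) (psi : R -> R) (a b : nat) (eps x0 y0 r : R) :
  (a <= b)%N -> 0 < eps -> eps < 1 -> 0 < r -> r < 1 ->
  disc x0 y0 r `<=` box eps ->
  0 < psi (hab a b)%:R -> psi (hab a b)%:R <= 1/4 ->
  16 <= b%:R * r -> 1 <= b%:R * eps ->
  ((r ^+ 2 * psi (hab a b)%:R / (8 * b%:R))%:E
     <= leb2 (sigma_ab psi a b `&` disc x0 y0 r))%E /\
  (leb2 (sigma_ab psi a b `&` disc x0 y0 r)
     <= (28 * r ^+ 2 * psi (hab a b)%:R / (eps * b%:R))%:E)%E.
Proof.
move=> ab e0 e1 r0 r1 sub p0 p1 hr he.
have mA : measurable (sigma_ab psi a b `&` disc x0 y0 r :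
    set (measurableTypeR R * measurableTypeR R)%type).
  by apply: measurableI; [exact: sigma_ab_meas|exact: disc_meas].
have mg := measurable_fun_xsection (@lebesgue_measure R) mA.
set p := psi _.
rewrite -/p in p0 p1.
set h : R := b%:R.
rewrite -/h in hr he.
have h1 : 1 <= h by apply: (@ge1_of R h eps e0 e1).
have hpos : 0 < h by lra.
rewrite /leb2 /product_measure1; split.
  have k0 : 0 <= r * p / (8 * h).
    by apply: divr_ge0; [apply: mulr_ge0|]; lra.
  apply: le_trans; last first.
    apply: (@int_lb R (fun x => (@lebesgue_measure R) (xsection (sigma_ab psi a b `&` disc x0 y0 r) x))
      `]x0 - r / 2, x0 + r / 2[ (r * p / (8 * h))) => //.
    all: try exact: measurable_itv.
    all: try (by move=> x; apply: measure_ge0; exact: measurable_xsection).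
    move=> x; rewrite /= in_itv /= => /andP[xl xr].
    by apply: (@sec_lb R psi a b eps x0 y0 r x) => //; lra.
  rewrite leb_itv; last lra.
  rewrite -EFinM lee_fin.
  have -> : r * p / (8 * h) * (x0 + r / 2 - (x0 - r / 2)) = r ^+ 2 * p / (8 * h).
    by rewrite expr2; field; lra.
  by [].
have k0 : 0 <= 14 * r * p / (eps * h).
  by apply: divr_ge0; apply: mulr_ge0; try apply: mulr_ge0; lra.
apply: le_trans.
  apply: (@int_ub R (fun x => (@lebesgue_measure R) (xsection (sigma_ab psi a b `&` disc x0 y0 r) x))
      `]x0 - r, x0 + r[ (14 * r * p / (eps * h))) => //.
  all: try exact: measurable_itv.
  all: try (by move=> x; apply: measure_ge0; exact: measurable_xsection).
  move=> x; rewrite indicE; case: (boolP (x \in _)) => [xI|xI].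
    rewrite mulr1; apply: (@sec_ub R psi a b eps x0 y0 r x) => //; lra.
  rewrite mulr0 sec_empty //; first by rewrite measure0.
  by move=> H; move/negP: xI; apply; rewrite in_setE /= in_itv /=.
rewrite leb_itv; last lra.
rewrite -EFinM lee_fin.
have -> : 14 * r * p / (eps * h) * (x0 + r - (x0 - r)) = 28 * r ^+ 2 * p / (eps * h).
  by rewrite expr2; field; apply/andP; split; lra.
by [].
Qed.

Lemma sigma_swap (R : realType) (psi : R -> R) (a b : nat) (x0 y0 r : R) :
  [set p | (sigma_ab psi a b `&` disc x0 y0 r) (p.2, p.1)] =
  sigma_ab psi b a `&` disc y0 x0 r.
Proof.
rewrite -disc_swap; apply/seteqP; split => -[x y] /= [[c _ Sc] D]; split => //;
  exists c => //; move: Sc; rewrite /sigma_c /= => -[h1 [h2 h3]]; split => //; split => //;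
  by rewrite /hab maxnC [X in `|X - _|]addrC.
Qed.

Lemma third (R : realType) (psi : R -> R) (a b c : nat) (eps x0 y0 r : R) :
  0 < eps -> eps < 1 -> disc x0 y0 r `<=` box eps ->
  psi (hab a b)%:R <= 1/4 -> 1 <= (hab a b)%:R * eps ->
  sigma_c psi a b c `&` disc x0 y0 r !=set0 ->
  eps / 2 * (hab a b)%:R < c%:R /\ (c%:R : R) < 2 * (hab a b)%:R.
Proof.
move=> e0 e1 sub p1 he [[z1 z2] [[_ [_ Hc]] /sub [/= /andP[ez1 z11] /andP[ez2 z21]]]].
set p := psi _ in p1 Hc.
set h : R := (hab a b)%:R in he *.
have h1 : 1 <= h by apply: (@ge1_of R h eps e0 e1).
rewrite /= ltr_norml !natrX in Hc; case/andP: Hc => Hc1 Hc2.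
set A : R := a%:R in Hc1 Hc2; set B : R := b%:R in Hc1 Hc2.
have A0 : 0 <= A by []. have B0 : 0 <= B by [].
have [Ah [Bh hAB]] : A <= h /\ B <= h /\ h ^+ 2 <= A ^+ 2 + B ^+ 2.
  have hE : h = (maxn a b)%:R by [].
  rewrite hE /A /B; case: (leqP a b) => ab.
    split; first by rewrite ler_nat.
    split => //; by have := sqr_ge0 (a%:R : R); lra.
  split => //; split; first by rewrite ler_nat ltnW.
  by have := sqr_ge0 (b%:R : R); lra.
have A2 : 0 <= A ^+ 2 by apply: sqr_ge0.
have B2 : 0 <= B ^+ 2 by apply: sqr_ge0.
have tl : eps * (A ^+ 2 + B ^+ 2) <= A ^+ 2 * z1 + B ^+ 2 * z2.
  have : A ^+ 2 * eps <= A ^+ 2 * z1 by apply: ler_wpM2l.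
  have : B ^+ 2 * eps <= B ^+ 2 * z2 by apply: ler_wpM2l.
  lra.
have tu : A ^+ 2 * z1 + B ^+ 2 * z2 <= A ^+ 2 + B ^+ 2.
  have : A ^+ 2 * z1 <= A ^+ 2 * 1 by apply: ler_wpM2l.
  have : B ^+ 2 * z2 <= B ^+ 2 * 1 by apply: ler_wpM2l.
  lra.
have A2h : A ^+ 2 <= h ^+ 2 by rewrite ler_sqr ?nnegrE //; lra.
have B2h : B ^+ 2 <= h ^+ 2 by rewrite ler_sqr ?nnegrE //; lra.
have heh : 1 <= h ^+ 2 * eps by apply: ge1_sq.
have ehh : eps * h ^+ 2 <= eps * (A ^+ 2 + B ^+ 2) by apply: ler_wpM2l; lra.
split.
  apply: sq_lt => //.
    by apply: mulr_ge0; [apply: divr_ge0|]; lra.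
  have -> : (eps / 2 * h) ^+ 2 = (eps / 4) * (h ^+ 2 * eps) by field.
  have : (eps / 4) * (h ^+ 2 * eps) <= (h ^+ 2 * eps) / 4.
    rewrite -subr_ge0.
    have -> : h ^+ 2 * eps / 4 - eps / 4 * (h ^+ 2 * eps) = (h ^+ 2 * eps) * (1 - eps) / 4
      by field.
    by apply: divr_ge0; [apply: mulr_ge0|]; lra.
  have : eps * h ^+ 2 = h ^+ 2 * eps by rewrite mulrC.
  lra.
apply: sq_lt => //; first lra.
have -> : (2 * h) ^+ 2 = 4 * h ^+ 2 by ring.
lra.
Qed.

Theorem mainTheorem4 (R : realType)
  (eps : R) (eps_gt0 : 0 < eps) (eps_lt1 : eps < 1) :
  exists c1 c2 : R, 0 < c1 /\ 0 < c2 /\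
    forall psi : R -> R,
    (forall x, 0 < x -> 0 < psi x) ->
    monotonic_pos psi ->
    psi x @[x --> +oo] --> (0 : R) ->
    forall x0 y0 r : R, 0 < r -> r < 1 ->
      disc x0 y0 r `<=` [set p | eps <= p.1 <= 1 /\ eps <= p.2 <= 1] ->
      exists H0 : nat, forall a b : nat, (H0 <= hab a b)%N ->
        let h := (hab a b)%:R : R in
        ((c1 * psi h / h)%:E * leb2 (disc x0 y0 r)
           <= leb2 (sigma_ab psi a b `&` disc x0 y0 r))%E /\
        (leb2 (sigma_ab psi a b `&` disc x0 y0 r)
           <= (c2 * psi h / h)%:E * leb2 (disc x0 y0 r))%E /\
        (forall c : nat, sigma_c psi a b c `&` disc x0 y0 r !=set0 ->
           eps / 2 * h < c%:R /\ c%:R < 2 * h).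
Proof.
exists (1 / 32), (28 / eps); split; first lra.
split; first by apply: divr_gt0; lra.
move=> psi ppos _ lim x0 y0 r r0 r1 sub.
have sub' : disc x0 y0 r `<=` box eps by [].
have := (cvgrPdist_lt _ _).1 lim (1/4) (ltac:(lra)).
move=> [M [_ HM]].
set Q := `|M| + 16 / r + 1 / eps + 1.
have r16 : 0 < 16 / r by apply: divr_gt0; lra.
have e1 : 0 < 1 / eps by apply: divr_gt0; lra.
have M0 : M <= `|M| by apply: ler_norm.
have nM : 0 <= `|M| by [].
have Q0 : 0 <= Q by rewrite /Q; lra.
exists (Num.truncn Q).+1.
move=> a b Hab h.
have [_ tQ] := @trunc_bounds R Q Q0.
have hQ : Q < h.
  apply: (lt_le_trans tQ); rewrite natr1 /h ler_nat; exact: Hab.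
have hpos : 0 < h by lra.
have p0 : 0 < psi h by apply: ppos.
have ph : psi h <= 1 / 4.
  have hM : M < h by rewrite /Q in hQ; lra.
  have := HM h hM; rewrite sub0r normrN ltr_norml => /andP[_ ?]; lra.
have hr : 16 <= h * r.
  have : 16 / r < h by rewrite /Q in hQ; lra.
  by rewrite ltr_pdivrMr // => ?; lra.
have he : 1 <= h * eps.
  have : 1 / eps < h by rewrite /Q in hQ; lra.
  by rewrite ltr_pdivrMr // => ?; lra.
have D1 := @disc_lb R x0 y0 r r0.
have D2 := @disc_ub R x0 y0 r r0.
have [L U] : ((r ^+ 2 * psi h / (8 * h))%:E
                <= leb2 (sigma_ab psi a b `&` disc x0 y0 r))%E /\
             (leb2 (sigma_ab psi a b `&` disc x0 y0 r)
                <= (28 * r ^+ 2 * psi h / (eps * h))%:E)%E.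
  have [ab|ba] := leqP a b.
    have hb : h = b%:R by rewrite /h /hab (maxn_idPr ab).
    rewrite hb in hr he.
    have := @core R psi a b eps x0 y0 r ab eps_gt0 eps_lt1 r0 r1 sub' p0 ph hr he.
    by rewrite -hb.
  have ha : h = a%:R by rewrite /h /hab (maxn_idPl (ltnW ba)).
  rewrite ha in hr he.
  have hh : hab b a = hab a b by rewrite /hab maxnC.
  have p0' : 0 < psi (hab b a)%:R by rewrite hh.
  have ph' : psi (hab b a)%:R <= 1 / 4 by rewrite hh.
  have := @core R psi b a eps y0 x0 r (ltnW ba) eps_gt0 eps_lt1 r0 r1
    (@box_swap R eps x0 y0 r sub') p0' ph' hr he.
  have mS : measurable (sigma_ab psi a b `&` disc x0 y0 r :
      set (measurableTypeR R * measurableTypeR R)%type).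
    by apply: measurableI; [exact: sigma_ab_meas|exact: disc_meas].
  by rewrite (@leb2_swap R _ mS) sigma_swap hh -/h -ha.
split.
  apply: le_trans L.
  have k0 : 0 <= 1 / 32 * psi h / h.
    by apply: divr_ge0; [apply: mulr_ge0|]; lra.
  apply: le_trans (lee_wpmul2l _ D2) _; first by rewrite lee_fin.
  rewrite -EFinM lee_fin.
  have -> : 1 / 32 * psi h / h * (4 * r ^+ 2) = r ^+ 2 * psi h / (8 * h).
    by field; lra.
  by [].
split; last first.
  move=> c Hc.
  exact: (@third R psi a b c eps x0 y0 r eps_gt0 eps_lt1 sub' ph he Hc).
apply: le_trans U _.
have k0 : 0 <= 28 / eps * psi h / h.
  by apply: divr_ge0; [apply: mulr_ge0; [apply: divr_ge0|]|]; lra.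
apply: le_trans _ (lee_wpmul2l _ D1); last by rewrite lee_fin.
rewrite -EFinM lee_fin.
have -> : 28 / eps * psi h / h * r ^+ 2 = 28 * r ^+ 2 * psi h / (eps * h).
  by field; apply/andP; split; lra.
by [].
Qed.
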